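(* Let $R>0$, $n\in\mathbb N$, $Q,K,V\in\mathbb R^{k\times d}$, $A:=K^\top Q/\sqrt k$, let $f$ be self-attention with parameters $(A,V)$ and $F$ mean-field self-attention with parameters $(A,V)$. Then $$\mathrm{Lip}^{\|\cdot\|_F}\big(f_{|B_R^n}\big)\le\mathrm{Lip}^{W_2}\big(F_{|\mathcal P(B_R)}\big).$$
   Context: For $X=(x_1,\dots,x_n)\in(\mathbb R^d)^n$, $f(X)=\big(V\sum_{j=1}^nP_{ij}x_j\big)_{1\le i\le n}$ with $P_{ij}=\exp(x_i^\top A^\top x_j)/\sum_{l=1}^n\exp(x_i^\top A^\top x_l)$; $\mathrm{Lip}^{\|\cdot\|_F}(f_{|\mathcal X})=\sup_{X\ne Y\in\mathcal X}\|f(X)-f(Y)\|_F/\|X-Y\|_F$ with $\|X\|_F=(\sum_i|x_i|^2)^{1/2}$. $B_R\subset\mathbb R^d$ is the closed ball of center 0 and radius $R$ and $\mathcal P(B_R)$ the set of probability measures supported in $B_R$. Mean-field self-attention: $F(\mu):=(\Gamma_\mu)_\sharp\mu$ with $\Gamma_\mu(x)=\int\exp(x^\top A^\top y)Vy\,d\mu(y)/\int\exp(x^\top A^\top y)d\mu(y)$ and $\sharp$ the pushforward. $W_2$ is the 2-Wasserstein distance and $\mathrm{Lip}^{W_2}(F_{|\mathcal X})=\sup_{\mu\ne\nu\in\mathcal X}W_2(F(\mu),F(\nu))/W_2(\mu,\nu)$. *)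

(* Defs.v *)
From HB Require Import structures.
From mathcomp Require Import all_boot all_order all_algebra.
From mathcomp Require Import all_classical all_reals all_analysis.

Set Implicit Arguments.
Unset Strict Implicit.
Unset Printing Implicit Defensive.

Import Order.TTheory GRing.Theory Num.Theory.
Import numFieldNormedType.Exports.

Local Open Scope classical_set_scope.
Local Open Scope ring_scope.

(* Points of R^m are represented as m.-tuple R, which MathComp-Analysis
   equips with the product (= Borel) sigma-algebra. *)
Section Defs.
Variable R : realType.

Definition sqnorm m (x : m.-tuple R) : R := \sum_(i < m) tnth x i ^+ 2.
Definition tocv m (x : m.-tuple R) : 'cV[R]_m := \col_(i < m) tnth x i.
Definition ofcv m (c : 'cV[R]_m) : m.-tuple R := [tuple c i 0 | i < m].

Definition ballB m (r : R) : set (m.-tuple R) := [set x | sqnorm x <= r ^+ 2].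

Definition attnA k d (Q K : 'M[R]_(k, d)) : 'M[R]_d :=
  (Num.sqrt (k%:R))^-1 *: (K^T *m Q).

Definition bil d (A : 'M[R]_d) (x y : d.-tuple R) : R :=
  ((tocv x)^T *m A^T *m tocv y) 0 0.

Definition applyV k d (V : 'M[R]_(k, d)) (y : d.-tuple R) : k.-tuple R :=
  ofcv (V *m tocv y).

Definition Pij n d (A : 'M[R]_d) (X : 'I_n -> d.-tuple R) (i j : 'I_n) : R :=
  expR (bil A (X i) (X j)) / \sum_(l < n) expR (bil A (X i) (X l)).

Definition selfattn n k d (A : 'M[R]_d) (V : 'M[R]_(k, d))
  (X : 'I_n -> d.-tuple R) : 'I_n -> k.-tuple R :=
  fun i => ofcv (V *m \sum_(j < n) (Pij A X i j *: tocv (X j))).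

Definition frob n m (X : 'I_n -> m.-tuple R) : R :=
  Num.sqrt (\sum_(i < n) sqnorm (X i)).

Definition subX n m (X Y : 'I_n -> m.-tuple R) : 'I_n -> m.-tuple R :=
  fun i => [tuple tnth (X i) j - tnth (Y i) j | j < m].

(* Lip^{||.||_F}(f restricted to Xs); Lipschitz constants are >= 0, hence
   the 0 in the supremum (it only matters when Xs has < 2 points). *)
Definition LipF n m p (f : ('I_n -> m.-tuple R) -> ('I_n -> p.-tuple R))
  (Xs : set ('I_n -> m.-tuple R)) : \bar R :=
  ereal_sup ([set 0%E] `|`
    [set r | exists X Y, [/\ Xs X, Xs Y, X <> Y &
       r = (frob (subX (f X) (f Y)) / frob (subX X Y))%:E]]).

Definition Gamma k d (A : 'M[R]_d) (V : 'M[R]_(k, d))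
  (mu : probability (d.-tuple R) R) (x : d.-tuple R) : k.-tuple R :=
  [tuple (Rintegral mu setT (fun y => expR (bil A x y) * tnth (applyV V y) i)
          / Rintegral mu setT (fun y => expR (bil A x y))) | i < k].

Definition meanfield k d (A : 'M[R]_d) (V : 'M[R]_(k, d))
  (mu : probability (d.-tuple R) R) : set (k.-tuple R) -> \bar R :=
  pushforward mu (Gamma A V mu).

Definition is_coupling m (mu nu : set (m.-tuple R) -> \bar R)
  (pi : probability (m.-tuple R * m.-tuple R)%type R) : Prop :=
  forall A : set (m.-tuple R), measurable A ->
    pi (A `*` setT) = mu A /\ pi (setT `*` A) = nu A.

Definition sqdist m (z : m.-tuple R * m.-tuple R) : R :=
  \sum_(i < m) (tnth z.1 i - tnth z.2 i) ^+ 2.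

Definition W2sq m (mu nu : set (m.-tuple R) -> \bar R) : \bar R :=
  ereal_inf [set (\int[pi]_z (sqdist z)%:E)%E
              | pi in [set pi | is_coupling mu nu pi]].

(* square root on [0, +oo] (never applied to negative values here) *)
Definition sqrte (x : \bar R) : \bar R :=
  match x with
  | r%:E => (Num.sqrt r)%:E
  | +oo%E => +oo%E
  | -oo%E => 0%E
  end.

Definition W2 m (mu nu : set (m.-tuple R) -> \bar R) : \bar R :=
  sqrte (W2sq mu nu).

(* quotient a / b in [0, +oo] for b > 0 (conventions x/+oo = 0 for finite x,
   +oo/b = +oo); only used with b = W2 mu nu, mu <> nu. *)
Definition edivp (a b : \bar R) : \bar R :=
  match a, b with
  | r%:E, s%:E => (r / s)%:E
  | r%:E, _ => 0%E
  | _, _ => +oo%E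
  end.

Definition supported_in m (r : R) (mu : probability (m.-tuple R) R) : Prop :=
  mu (~` @ballB m r) = 0%E.

Definition LipW2 k d (r : R)
  (F : probability (d.-tuple R) R -> set (k.-tuple R) -> \bar R) : \bar R :=
  ereal_sup ([set 0%E] `|`
    [set e | exists mu nu : probability (d.-tuple R) R,
       [/\ supported_in r mu, supported_in r nu,
           (mu : set _ -> \bar R) <> nu &
           e = edivp (W2 (F mu) (F nu)) (W2 mu nu)]]).

End Defs.

(* Main.v *)
Require Import Defs.
From HB Require Import structures.
From mathcomp Require Import all_boot all_order all_algebra.
From mathcomp Require Import all_classical all_reals all_analysis.
From mathcomp Require Import measurable_realfun measurable_fun_approximation.
From mathcomp Require Import ring lra.
Import Order.TTheory GRing.Theory Num.Theory.
Import numFieldNormedType.Exports.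
Set Implicit Arguments.
Unset Strict Implicit.
Unset Printing Implicit Defensive.
Local Open Scope classical_set_scope.
Local Open Scope ring_scope.


Section PartA.
Variable R : realType.

Lemma lagrange (I : finType) (u v : I -> R) :
  \sum_i \sum_j (u i * v j - u j * v i) ^+ 2 =
  2 * ((\sum_i u i ^+ 2) * (\sum_i v i ^+ 2)) - 2 * (\sum_i u i * v i) ^+ 2.
Proof.
have E : forall i j, (u i * v j - u j * v i) ^+ 2 =
   u i ^+ 2 * v j ^+ 2 + u j ^+ 2 * v i ^+ 2 - 2 * ((u i * v i) * (u j * v j)).
  by move=> i j; ring.
under eq_bigr do under eq_bigr do rewrite E.
under eq_bigr do rewrite sumrB big_split /=.
rewrite sumrB big_split /=.
have H1 : \sum_i \sum_j u i ^+ 2 * v j ^+ 2 = (\sum_i u i ^+ 2) * (\sum_i v i ^+ 2).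
  by rewrite mulr_suml; apply: eq_bigr => i _; rewrite mulr_sumr.
have H2 : \sum_i \sum_j (2 * ((u i * v i) * (u j * v j))) = 2 * (\sum_i u i * v i) ^+ 2.
  rewrite expr2 mulr_suml mulr_sumr; apply: eq_bigr => i _.
  by rewrite mulr_sumr mulr_sumr; apply: eq_bigr => j _; ring.
have H1' : \sum_i \sum_j u j ^+ 2 * v i ^+ 2 = (\sum_i u i ^+ 2) * (\sum_i v i ^+ 2).
  by rewrite mulrC mulr_suml; apply: eq_bigr => i _; rewrite mulr_sumr; apply: eq_bigr => j _; rewrite mulrC.
rewrite H1 H1' H2; ring.
Qed.

Lemma cauchy_schwarz (I : finType) (u v : I -> R) :
  (\sum_i u i * v i) ^+ 2 <= (\sum_i u i ^+ 2) * (\sum_i v i ^+ 2).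
Proof.
have := lagrange u v.
have : 0 <= \sum_i \sum_j (u i * v j - u j * v i) ^+ 2.
  by apply: sumr_ge0 => i _; apply: sumr_ge0 => j _; exact: sqr_ge0.
move=> H0 HE; rewrite HE in H0; lra.
Qed.

Lemma cs_sqrt (I : finType) (u v : I -> R) :
  \sum_i u i * v i <= Num.sqrt (\sum_i u i ^+ 2) * Num.sqrt (\sum_i v i ^+ 2).
Proof.
rewrite -sqrtrM; last by apply: sumr_ge0 => i _; exact: sqr_ge0.
apply: le_trans (ler_norm _) _.
rewrite -sqrtr_sqr; apply: ler_wsqrtr; exact: cauchy_schwarz.
Qed.

Lemma minkowski (I : finType) (u v : I -> R) :
  Num.sqrt (\sum_i (u i + v i) ^+ 2) <=
  Num.sqrt (\sum_i u i ^+ 2) + Num.sqrt (\sum_i v i ^+ 2).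
Proof.
have hu : 0 <= \sum_i u i ^+ 2 by apply: sumr_ge0 => i _; exact: sqr_ge0.
have hv : 0 <= \sum_i v i ^+ 2 by apply: sumr_ge0 => i _; exact: sqr_ge0.
have su := sqrtr_ge0 (\sum_i u i ^+ 2); have sv := sqrtr_ge0 (\sum_i v i ^+ 2).
rewrite -(ger0_norm (addr_ge0 su sv)) -sqrtr_sqr; apply: ler_wsqrtr.
have -> : \sum_i (u i + v i) ^+ 2 =
   \sum_i u i ^+ 2 + \sum_i v i ^+ 2 + 2 * \sum_i u i * v i.
  rewrite mulr_sumr -!big_split /=; apply: eq_bigr => i _; ring.
rewrite sqrrD !sqr_sqrtr //.
have := cs_sqrt u v; lra.
Qed.


Lemma local_global (D : R -> R -> R) (c : R) :
  (forall x y z, D x z <= D x y + D y z) ->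
  (forall x y, D x y = D y x) ->
  (forall t, 0 <= t <= 1 -> exists2 e, 0 < e &
     forall s, 0 <= s <= 1 -> `|s - t| < e -> D s t <= c * `|s - t|) ->
  D 1 0 <= c.
Proof.
move=> Dtri Dsym Dloc.
have D00 : D 0 0 <= 0.
  have [e e0 He] := Dloc 0 (ltac:(lra)).
  by have := He 0 (ltac:(lra)); rewrite subrr normr0 mulr0; apply.
pose A := [set u : R | (0 <= u <= 1) /\ forall v, 0 <= v <= u -> D v 0 <= c * v].
have A0 : A 0.
  split; first lra.
  move=> v /andP[v0 v1]; have -> : v = 0 by apply/eqP; rewrite eq_le v0 v1.
  by rewrite mulr0.
have A1 : ubound A 1 by move=> u [/andP[_ ->]].
have hs : has_sup A by split; [exists 0 | exists 1].
set s := sup A.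
have s0 : 0 <= s by apply: sup_upper_bound.
have s1 : s <= 1 by apply: sup_le_ub => //; exists 0.
have key : forall v, 0 <= v -> v < s -> D v 0 <= c * v.
  move=> v v0 vs.
  have [u [[/andP[u0 u1] Hu] us]] : exists u, A u /\ v < u.
    have sv : 0 < s - v by lra.
    have [u Au Hu] := sup_adherent sv hs.
    by exists u; split => //; move: Hu; rewrite /s; lra.
  by apply: Hu; lra.
have Ds : D s 0 <= c * s.
  have [->|sp] := eqVneq s 0; first by rewrite mulr0.
  have sp' : 0 < s by rewrite lt_neqAle eq_sym sp s0.
  have [e e0 He] := Dloc s (ltac:(lra)).
  have em : 0 < Num.min e s by rewrite lt_min e0 sp'.
  have [u Au Hu] := sup_adherent em hs.
  have us : u <= s by apply: sup_upper_bound.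
  case: Au => /andP[u0 u1] HA.
  have h1 := HA u (ltac:(lra)).
  have hm1 : Num.min e s <= e by rewrite ge_min lexx.
  have hm2 : Num.min e s <= s by rewrite ge_min lexx orbT.
  have h2 : D u s <= c * `|u - s|.
    apply: He; first lra.
    rewrite ler0_norm; last lra.
    move: Hu; rewrite /s; lra.
  rewrite ler0_norm in h2; last lra.
  have := Dtri s u 0; rewrite (Dsym s u).
  have -> : c * s = c * - (u - s) + c * u by ring.
  lra.
have sA : A s.
  split; first lra.
  move=> v /andP[v0 vs]; have [vs'|vs'] := ltP v s; first exact: key.
  have -> : v = s by apply/eqP; rewrite eq_le vs vs'.
  exact: Ds.
have s_eq1 : s = 1.
  apply/eqP; rewrite eq_le s1 /=; rewrite leNgt; apply/negP => s1'.
  have [e e0 He] := Dloc s (ltac:(lra)).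
  pose m := Num.min (1 - s) (e / 2).
  have m0 : 0 < m by rewrite lt_min subr_gt0 s1' /=; lra.
  have m1 : m <= 1 - s by rewrite ge_min lexx.
  have m2 : m <= e / 2 by rewrite ge_min lexx orbT.
  have Av : A (s + m).
    split; first lra.
    move=> w /andP[w0 ws].
    have [wle|wgt] := leP w s; first by case: sA => _; apply; lra.
    have h1 : D w s <= c * `|w - s| by apply: He; [lra | rewrite gtr0_norm; lra].
    rewrite gtr0_norm in h1; last lra.
    have := Dtri w s 0; case: sA => _ /(_ s (ltac:(lra))) h2.
    have -> : c * w = c * (w - s) + c * s by ring.
    lra.
  have : s + m <= s by apply: sup_upper_bound.
  lra.
by case: sA => _ /(_ 1); rewrite s_eq1 mulr1; apply; lra.
Qed.


Definition sqd p (x y : p.-tuple R) := \sum_(i < p) (tnth x i - tnth y i) ^+ 2.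

Lemma sqd_ge0 p (x y : p.-tuple R) : 0 <= sqd x y.
Proof. by apply: sumr_ge0 => i _; exact: sqr_ge0. Qed.

Lemma sqd_sym p (x y : p.-tuple R) : sqd x y = sqd y x.
Proof. by apply: eq_bigr => i _; rewrite -sqrrN opprB. Qed.

Lemma sqd_tri p (x y z : p.-tuple R) :
  Num.sqrt (sqd x z) <= Num.sqrt (sqd x y) + Num.sqrt (sqd y z).
Proof.
have := minkowski (fun i => tnth x i - tnth y i) (fun i => tnth y i - tnth z i).
by rewrite /sqd; under eq_bigr do rewrite addrA subrK.
Qed.

Lemma sqd_eq0 p (x y : p.-tuple R) : sqd x y = 0 -> x = y.
Proof.
move=> /eqP; rewrite psumr_eq0; last by move=> i _; exact: sqr_ge0.
move=> /allP H; apply: eq_from_tnth => i.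
have /implyP := H i (mem_index_enum i); rewrite sqrf_eq0 subr_eq0 => /(_ isT).
by move/eqP.
Qed.

Lemma sqd_xx p (x : p.-tuple R) : sqd x x = 0.
Proof. by rewrite /sqd big1 // => i _; rewrite subrr expr0n. Qed.

Lemma frobE n p (X Y : 'I_n -> p.-tuple R) :
  frob (subX X Y) = Num.sqrt (\sum_a sqd (X a) (Y a)).
Proof.
rewrite /frob /sqnorm /sqd; congr Num.sqrt; apply: eq_bigr => a _.
by apply: eq_bigr => j _; rewrite /subX tnth_mktuple.
Qed.

Lemma frob_tri n p (X Y Z : 'I_n -> p.-tuple R) :
  Num.sqrt (\sum_a sqd (X a) (Z a)) <=
  Num.sqrt (\sum_a sqd (X a) (Y a)) + Num.sqrt (\sum_a sqd (Y a) (Z a)).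
Proof.
have := minkowski (fun q : 'I_n * 'I_p => tnth (X q.1) q.2 - tnth (Y q.1) q.2)
                  (fun q : 'I_n * 'I_p => tnth (Y q.1) q.2 - tnth (Z q.1) q.2).
under eq_bigr do rewrite addrA subrK.
by rewrite /sqd !pair_bigA /=.
Qed.

Lemma frob_sym n p (X Y : 'I_n -> p.-tuple R) :
  \sum_a sqd (X a) (Y a) = \sum_a sqd (Y a) (X a).
Proof. by apply: eq_bigr => a _; rewrite sqd_sym. Qed.

Definition segm n p (X Y : 'I_n -> p.-tuple R) (t : R) : 'I_n -> p.-tuple R :=
  fun a => [tuple tnth (X a) j + t * (tnth (Y a) j - tnth (X a) j) | j < p].

Lemma segm_diff n p (X Y : 'I_n -> p.-tuple R) s t :
  \sum_a sqd (segm X Y s a) (segm X Y t a) = (s - t) ^+ 2 * \sum_a sqd (Y a) (X a).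
Proof.
rewrite mulr_sumr; apply: eq_bigr => a _; rewrite /sqd mulr_sumr.
by apply: eq_bigr => j _; rewrite !tnth_mktuple; ring.
Qed.

Lemma segm0 n p (X Y : 'I_n -> p.-tuple R) : segm X Y 0 = X.
Proof.
by apply: funext => a; apply: eq_from_tnth => j; rewrite tnth_mktuple mul0r addr0.
Qed.

Lemma segm1 n p (X Y : 'I_n -> p.-tuple R) : segm X Y 1 = Y.
Proof.
by apply: funext => a; apply: eq_from_tnth => j; rewrite tnth_mktuple mul1r addrC subrK.
Qed.

Lemma sqrt_scale (I : finType) (c : R) (u : I -> R) :
  Num.sqrt (\sum_i (c * u i) ^+ 2) = `|c| * Num.sqrt (\sum_i u i ^+ 2).
Proof.
rewrite -(sqrtr_sqr c) -sqrtrM ?sqr_ge0 // mulr_sumr.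
by congr Num.sqrt; apply: eq_bigr => i _; rewrite exprMn.
Qed.

Lemma segm_ball n p (X Y : 'I_n -> p.-tuple R) (r : R) t a :
  0 < r -> 0 <= t <= 1 -> ballB r (X a) -> ballB r (Y a) ->
  ballB r (segm X Y t a).
Proof.
rewrite /ballB /sqnorm /= => r0 /andP[t0 t1] hx hy.
have hs : Num.sqrt (\sum_i tnth (segm X Y t a) i ^+ 2) <= r.
  have := minkowski (fun i => (1 - t) * tnth (X a) i) (fun i => t * tnth (Y a) i).
  rewrite !sqrt_scale.
  have -> : \sum_i ((1 - t) * tnth (X a) i + t * tnth (Y a) i) ^+ 2 =
            \sum_i tnth (segm X Y t a) i ^+ 2.
    by apply: eq_bigr => i _; rewrite tnth_mktuple; congr (_ ^+ 2); ring.
  have hx' : Num.sqrt (\sum_i tnth (X a) i ^+ 2) <= r.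
    by rewrite -(ger0_norm (ltW r0)) -sqrtr_sqr ler_wsqrtr.
  have hy' : Num.sqrt (\sum_i tnth (Y a) i ^+ 2) <= r.
    by rewrite -(ger0_norm (ltW r0)) -sqrtr_sqr ler_wsqrtr.
  rewrite (ger0_norm t0) ger0_norm; last lra.
  move=> h; apply: le_trans h _.
  have sx := sqrtr_ge0 (\sum_i tnth (X a) i ^+ 2).
  have sy := sqrtr_ge0 (\sum_i tnth (Y a) i ^+ 2).
  nra.
have h0 : 0 <= \sum_i tnth (segm X Y t a) i ^+ 2 by apply: sumr_ge0 => i _; exact: sqr_ge0.
rewrite -(sqr_sqrtr h0); rewrite ler_sqr //; [exact: sqrtr_ge0 | exact: ltW].
Qed.

End PartA.


Section Emp.
Variables (R : realType) (dd : measure_display) (T : measurableType dd).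

Definition empm m (P : 'I_m.+1 -> T) : {measure set T -> \bar R} :=
  msum (fun k => @dirac _ T (P (inord k)) R) m.+1.

Definition emp m (P : 'I_m.+1 -> T) : probability T R :=
  mnormalize (empm P) (@dirac _ T (P ord0) R).

Lemma empmE m (P : 'I_m.+1 -> T) A :
  empm P A = ((\sum_i \1_A (P i)) : R)%:E.
Proof.
rewrite /empm /msum -sumEFin; apply: eq_bigr => i _.
by rewrite inord_val.
Qed.

Lemma empE m (P : 'I_m.+1 -> T) A :
  emp P A = (((\sum_i \1_A (P i)) : R) / m.+1%:R)%:E.
Proof.
have hT : empm P setT = (m.+1%:R : R)%:E.
  rewrite empmE; congr EFin.
  rewrite (eq_bigr (fun=> 1)); last by move=> i _; rewrite indicE in_setT.
  by rewrite sumr_const card_ord.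
rewrite /emp /=; unfold mnormalize; rewrite hT.
have -> : ((m.+1%:R : R)%:E == 0)%E || ((m.+1%:R : R)%:E == +oo)%E = false.
  by rewrite eqe pnatr_eq0.
by rewrite empmE /= -EFinM.
Qed.

End Emp.

Section EmpInt.
Variables (R : realType) (dd : measure_display) (T : measurableType dd).
Local Open Scope ereal_scope.

Lemma int_emp_ge0 m (P : 'I_m.+1 -> T) (g : T -> \bar R) :
  measurable_fun setT g -> (forall x, 0 <= g x) ->
  \int[emp R P]_(x in setT) g x = (\sum_i g (P i)) * (m.+1%:R^-1 : R)%:E.
Proof.
move=> mg g0.
have w0 : (0 <= (m.+1%:R^-1 : R))%R by rewrite invr_ge0.
pose w : {nonneg R} := NngNum w0.
rewrite (eq_measure_integral (mscale w (empm R P))); last first.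
  move=> A _ _; rewrite -[LHS]/(emp R P A : \bar R) empE.
  transitivity ((w%:num)%:E * (empm R P A))%E; last by [].
  rewrite empmE -EFinM; congr EFin; by rewrite mulrC.
rewrite ge0_integral_mscale //.
rewrite /empm ge0_integral_measure_sum //.
rewrite muleC; congr (_ * _).
apply: eq_bigr => i _; rewrite integral_dirac // diracE in_setT mul1e.
by rewrite inord_val.
Qed.

Lemma int_emp m (P : 'I_m.+1 -> T) (f : T -> R) :
  measurable_fun setT f ->
  \int[emp R P]_(x in setT) (f x)%:E = ((\sum_i f (P i)) / m.+1%:R)%:E.
Proof.
move=> mf.
have mF : measurable_fun setT (fun x => (f x)%:E) by apply/measurable_EFinP.
rewrite integralE !int_emp_ge0 //.
under eq_bigr do rewrite funeposE /= -EFin_max.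
under [X in _ - X * _]eq_bigr do rewrite funenegE /= -EFin_max.
rewrite !sumEFin -!EFinM -EFinB; congr EFin.
rewrite -mulrBl -sumrB; congr (_ * _)%R; apply: eq_bigr => i _.
rewrite /Order.max /=; case: ifPn => h1; case: ifPn => h2; lra.
- exact: measurable_funeneg.
- exact: measurable_funepos.
Qed.

End EmpInt.

Section Coup.
Variables (R : realType) (p : nat).
Local Notation T := (p.-tuple R).

Lemma meas_set1 (x : T) : measurable [set x].
Proof.
have -> : [set x] = \bigcap_(i in [set: 'I_p]) ((fun y : T => tnth y i) @^-1` [set tnth x i]).
  apply/seteqP; split => [y /= -> i _ //|y /= H].
  by apply: eq_from_tnth => i; apply: H.
apply: fin_bigcap_measurable; first exact: finite_finset.
move=> i _; rewrite -[X in measurable X]setTI.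
by apply: measurable_tnth => //; exact: measurable_set1.
Qed.

Lemma meas_tnth_sq (i : 'I_p) :
  measurable_fun setT (fun z : T * T => (tnth z.1 i - tnth z.2 i) ^+ 2).
Proof.
apply: measurable_funX; apply: measurable_funB.
- exact: (measurableT_comp (measurable_tnth i) measurable_fst).
- exact: (measurableT_comp (measurable_tnth i) measurable_snd).
Qed.

Lemma meas_sqdist : measurable_fun setT (@sqdist R p).
Proof.
rewrite /sqdist; apply: measurable_sum => i; exact: meas_tnth_sq.
Qed.


Lemma coupling_id m (P Q : 'I_m.+1 -> T) :
  is_coupling (emp R P) (emp R Q) (emp R (fun a => (P a, Q a))).
Proof.
move=> A mA; rewrite !empE; split; congr EFin; congr (_ / _);
  by apply: eq_bigr => a _; rewrite !indicE in_setX in_setT ?andbT.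
Qed.

Lemma cost_id m (P Q : 'I_m.+1 -> T) :
  (\int[emp R (fun a => (P a, Q a))]_(z in setT) (sqdist z)%:E =
   ((\sum_a sqd (P a) (Q a)) / m.+1%:R)%:E)%E.
Proof. by rewrite int_emp //; exact: meas_sqdist. Qed.


Lemma ind1 (x y : T) : \1_[set y] x = (x == y)%:R :> R.
Proof.
rewrite indicE; have [->|ne] := eqVneq x y; first by rewrite mem_set.
by rewrite memNset //= => e; move: ne; rewrite e eqxx.
Qed.

Definition sepc m (P Q : 'I_m.+1 -> T) :=
  forall a b, P a <> P b -> 4 * sqd (P b) (Q b) < sqd (P a) (P b).

Lemma sep_f1 m (P Q : 'I_m.+1 -> T) : sepc P Q ->
  forall a b, sqd (P b) (Q b) <= sqd (P a) (Q b).
Proof.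
move=> hs a b; have [->|ne] := eqVneq (P a) (P b); first by [].
have h := hs a b (elimN eqP ne).
have t := sqd_tri (P a) (Q b) (P b); rewrite (sqd_sym (Q b)) in t.
have e1 := sqr_sqrtr (sqd_ge0 (P a) (P b)).
have e2 := sqr_sqrtr (sqd_ge0 (P a) (Q b)).
have e3 := sqr_sqrtr (sqd_ge0 (P b) (Q b)).
have g1 := sqrtr_ge0 (sqd (P a) (P b)).
have g2 := sqrtr_ge0 (sqd (P a) (Q b)).
have g3 := sqrtr_ge0 (sqd (P b) (Q b)).
move: h t e1 e2 e3 g1 g2 g3.
set x1 := sqd (P a) (P b); set x2 := sqd (P a) (Q b); set x3 := sqd (P b) (Q b).
set s1 := Num.sqrt x1; set s2 := Num.sqrt x2; set s3 := Num.sqrt x3.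
move=> h t e1 e2 e3 g1 g2 g3.
rewrite -e2 -e3 in h *; rewrite -e1 in h.
have hs32 : s3 <= s2.
  rewrite leNgt; apply/negP => lt.
  have l : s1 < 2 * s3 by lra.
  have : s1 * s1 <= s1 * (2 * s3) by apply: ler_wpM2l => //; exact: ltW.
  have p3 : 0 < 2 * s3 by lra.
  have : s1 * (2 * s3) < (2 * s3) * (2 * s3) by rewrite ltr_pM2r.
  rewrite !expr2 in h; lra.
by rewrite ler_pXn2r // ?nnegrE.
Qed.

Lemma sep_f2 m (P Q : 'I_m.+1 -> T) : sepc P Q ->
  forall a b, Q a = Q b -> P a = P b.
Proof.
move=> hs a b eQ; apply/eqP; apply/negPn/negP => ne.
have h1 := hs a b (elimN eqP ne).
have h2 := hs b a (fun e => (elimN eqP ne) (esym e)).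
have t := sqd_tri (P a) (Q a) (P b); rewrite eQ (sqd_sym (Q b)) in t.
rewrite (sqd_sym (P b) (P a)) in h2.
have e1 := sqr_sqrtr (sqd_ge0 (P a) (P b)).
have e2 := sqr_sqrtr (sqd_ge0 (P a) (Q a)).
have e3 := sqr_sqrtr (sqd_ge0 (P b) (Q b)).
have g1 := sqrtr_ge0 (sqd (P a) (P b)).
have g2 := sqrtr_ge0 (sqd (P a) (Q a)).
have g3 := sqrtr_ge0 (sqd (P b) (Q b)).
rewrite eQ in e2 g2 h2.
move: h1 h2 t e1 e2 e3 g1 g2 g3.
set x1 := sqd (P a) (P b); set x2 := sqd (P a) (Q b); set x3 := sqd (P b) (Q b).
set s1 := Num.sqrt x1; set s2 := Num.sqrt x2; set s3 := Num.sqrt x3.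
move=> h1 h2 t e1 e2 e3 g1 g2 g3.
rewrite -e2 -e3 -e1 in h1 h2.
have l2 : 2 * s2 < s1.
  rewrite ltNge; apply/negP => le.
  have : s1 * s1 <= s1 * (2 * s2) by apply: ler_wpM2l.
  have : s1 * (2 * s2) <= (2 * s2) * (2 * s2) by apply: ler_wpM2r => //; lra.
  rewrite !expr2 in h2; lra.
have l3 : 2 * s3 < s1.
  rewrite ltNge; apply/negP => le.
  have : s1 * s1 <= s1 * (2 * s3) by apply: ler_wpM2l.
  have : s1 * (2 * s3) <= (2 * s3) * (2 * s3) by apply: ler_wpM2r => //; lra.
  rewrite !expr2 in h1; lra.
have : s1 < s1 by lra.
by rewrite ltxx.
Qed.


Lemma cost_lb m (P Q : 'I_m.+1 -> T) (pi : probability (T * T)%type R) :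
  sepc P Q -> is_coupling (emp R P) (emp R Q) pi ->
  (((\sum_a sqd (P a) (Q a)) / m.+1%:R)%:E <= \int[pi]_(z in setT) (sqdist z)%:E)%E.
Proof.
move=> hs hc.
pose c b := sqd (P b) (Q b).
pose mult b := \sum_a \1_[set Q b] (Q a) : R.
pose beta v := \sum_b (c b / mult b) * \1_[set Q b] v.
have mult_pos : forall b, 0 < mult b.
  move=> b; rewrite /mult (bigD1 b) //= ind1 eqxx.
  apply: (lt_le_trans ltr01); rewrite lerDl; apply: sumr_ge0 => a _.
  by rewrite ind1; case: eqP.
have mult_eq : forall a b, Q a = Q b -> mult a = mult b by move=> a b e; rewrite /mult e.
have c_ge0 : forall b, 0 <= c b by move=> b; exact: sqd_ge0.
have betaQ : forall a, beta (Q a) = c a.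
  move=> a; rewrite /beta.
  rewrite (eq_bigr (fun b => c a / mult a * \1_[set Q a] (Q b))); last first.
    move=> b _; rewrite !ind1; have [e|ne] := eqVneq (Q a) (Q b).
    + by rewrite (mult_eq a b e) /c (sep_f2 hs e) e.
    + by rewrite !mulr0.
  rewrite -mulr_sumr -/(mult a) mulrAC -mulrA divff ?mulr1 //.
  exact: lt0r_neq0 (mult_pos a).
have beta_ge0 : forall v, 0 <= beta v.
  move=> v; apply: sumr_ge0 => b _; apply: mulr_ge0; last by rewrite ind1; case: eqP.
  by apply: divr_ge0; [exact: c_ge0 | exact: ltW].
have beta_le : forall a v, beta v <= sqd (P a) v.
  move=> a v.
  have [[b ->]|nb] := pselect (exists b, v = Q b).
    by rewrite betaQ; exact: sep_f1.
  rewrite /beta big1; first exact: sqd_ge0.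
  move=> b _; rewrite ind1; case: eqP => [e|_]; last by rewrite mulr0.
  by exfalso; apply: nb; exists b.
have mbeta : measurable_fun setT beta.
  apply: measurable_sum => b; apply: measurable_funM; first exact: measurable_cst.
  by apply: measurable_indic; exact: meas_set1.
pose SP := [set x : T | exists a, x = P a].
have mSP : measurable SP.
  have -> : SP = \bigcup_(a in [set: 'I_m.+1]) [set P a].
    by apply/seteqP; split => [x [a ->]|x [a _ /= ->]]; [exists a | exists a].
  apply: fin_bigcup_measurable; first exact: finite_finset.
  by move=> a _; exact: meas_set1.
have piN : pi (~` SP `*` setT) = 0%E.
  rewrite (hc _ (measurableC mSP)).1 empE big1 ?mul0r //.
  move=> a _; rewrite indicE memNset //= => H; apply: H; by exists a.
have E1 : (((\sum_a sqd (P a) (Q a)) / m.+1%:R)%:E =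
            \int[emp R Q]_(v in setT) (beta v)%:E)%E.
  by rewrite int_emp //; congr EFin; congr (_ / _); apply: eq_bigr => a _; rewrite betaQ.
rewrite E1.
rewrite (eq_measure_integral (pushforward pi snd)); last first.
  move=> A mA _; rewrite /pushforward /=.
  transitivity (pi (setT `*` A)); first by rewrite (hc _ mA).2.
  by congr (pi _); apply/seteqP; split => [[x y] [] /=|[x y] /= ay].
rewrite ge0_integral_pushforward //; last 2 first.
- by apply/measurable_EFinP.
- by move=> v _; rewrite lee_fin.
rewrite preimage_setT.
apply: ae_ge0_le_integral => //.
- by move=> z _; rewrite lee_fin.
- by apply/measurable_EFinP; exact: (measurableT_comp mbeta measurable_snd).
- by move=> z _; rewrite lee_fin; exact: sqd_ge0.
- by apply/measurable_EFinP; exact: meas_sqdist.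
exists (~` SP `*` setT); split => //.
  by apply: measurableX => //; exact: measurableC.
move=> [x y] /= H; split => //= hx; apply: H => _ /=.
rewrite lee_fin; case: hx => a ->; exact: beta_le.
Qed.


Lemma W2sq_emp m (P Q : 'I_m.+1 -> T) : sepc P Q ->
  W2sq (emp R P) (emp R Q) = ((\sum_a sqd (P a) (Q a)) / m.+1%:R)%:E.
Proof.
move=> hs; apply/eqP; rewrite eq_le; apply/andP; split.
  apply: ge_ereal_inf; exists (\int[emp R (fun a => (P a, Q a))]_(z in setT) (sqdist z)%:E)%E.
    by exists (emp R (fun a => (P a, Q a))) => //; exact: coupling_id.
  by rewrite cost_id.
apply: le_ereal_inf_tmp => _ [pi hc <-]; exact: cost_lb.
Qed.

Lemma W2_emp m (P Q : 'I_m.+1 -> T) : sepc P Q ->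
  W2 (emp R P) (emp R Q) = (Num.sqrt ((\sum_a sqd (P a) (Q a)) / m.+1%:R))%:E.
Proof. by move=> hs; rewrite /W2 W2sq_emp. Qed.

Lemma emp_neq m (P Q : 'I_m.+1 -> T) : sepc P Q ->
  0 < \sum_a sqd (P a) (Q a) ->
  (emp R P : set T -> \bar R) <> emp R Q.
Proof.
move=> hs hpos E.
have hc : is_coupling (emp R P) (emp R Q) (emp R (fun a => (P a, P a))).
  rewrite -E; exact: coupling_id.
have := cost_lb hs hc; rewrite cost_id lee_fin.
rewrite [in X in _ <= X]big1; last by move=> a _; exact: sqd_xx.
rewrite mul0r pmulr_rle0 //.
by rewrite leNgt invr_gt0 ltr0n.
Qed.

End Coup.


Section Attn.
Variables (R : realType) (k d : nat) (A : 'M[R]_d) (V : 'M[R]_(k, d)).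

Lemma bilE (x y : d.-tuple R) :
  bil A x y = \sum_q (\sum_p tnth x p * A q p) * tnth y q.
Proof.
rewrite /bil mxE; apply: eq_bigr => q _; rewrite !mxE; congr (_ * _).
by apply: eq_bigr => p _; rewrite !mxE.
Qed.

Lemma applyVE (y : d.-tuple R) i :
  tnth (applyV V y) i = \sum_l V i l * tnth y l.
Proof.
rewrite /applyV /ofcv tnth_mktuple mxE; apply: eq_bigr => l _; by rewrite mxE.
Qed.

Lemma meas_lin (c : 'I_d -> R) :
  measurable_fun setT (fun y : d.-tuple R => \sum_q c q * tnth y q).
Proof.
apply: measurable_sum => q; apply: measurable_funM; first exact: measurable_cst.
exact: measurable_tnth.
Qed.

Lemma meas_ebil (x : d.-tuple R) :
  measurable_fun setT (fun y : d.-tuple R => expR (bil A x y)).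
Proof.
rewrite (_ : (fun y => expR (bil A x y)) =
  (fun y => expR (\sum_q (\sum_p tnth x p * A q p) * tnth y q))); last first.
  by apply: funext => y; rewrite bilE.
exact: (measurableT_comp (@measurable_expR R) (meas_lin _)).
Qed.

Lemma meas_num (x : d.-tuple R) i :
  measurable_fun setT (fun y : d.-tuple R => expR (bil A x y) * tnth (applyV V y) i).
Proof.
rewrite (_ : (fun y => expR (bil A x y) * tnth (applyV V y) i) =
  (fun y => expR (bil A x y) * \sum_l V i l * tnth y l)); last first.
  by apply: funext => y; rewrite applyVE.
exact: (measurable_funM (meas_ebil x) (meas_lin _)).
Qed.

Lemma Rint_emp m (P : 'I_m.+1 -> d.-tuple R) (f : d.-tuple R -> R) :
  measurable_fun setT f ->
  Rintegral (emp R P) setT f = (\sum_i f (P i)) / m.+1%:R.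
Proof. by move=> mf; rewrite /Rintegral int_emp. Qed.

Lemma Gamma_emp m (P : 'I_m.+1 -> d.-tuple R) b :
  Gamma A V (emp R P) (P b) = selfattn A V P b.
Proof.
apply: eq_from_tnth => i; rewrite tnth_mktuple !Rint_emp; last 2 first.
- exact: meas_ebil.
- exact: meas_num.
rewrite /selfattn /ofcv tnth_mktuple mxE.
have hn : (m.+1%:R : R) != 0 by rewrite pnatr_eq0.
have hs : \sum_j expR (bil A (P b) (P j)) != 0.
  rewrite lt0r_neq0 // (bigD1 b) //= ltr_pwDl ?expR_gt0 //.
  by apply: sumr_ge0 => j _; exact: ltW (expR_gt0 _).
have divdiv : forall a s n : R, n != 0 -> s != 0 -> a / n / (s / n) = a / s.
  by move=> a s n n0 s0; field; rewrite n0 s0.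
rewrite divdiv //.
rewrite mulr_suml.
under eq_bigr do rewrite applyVE.
under [RHS]eq_bigr do rewrite summxE mulr_sumr.
rewrite exchange_big /=; apply: eq_bigr => j _.
rewrite /Pij mulr_sumr mulr_suml; apply: eq_bigr => l _.
rewrite !mxE; ring.
Qed.

Lemma meanfield_emp m (P : 'I_m.+1 -> d.-tuple R) :
  meanfield A V (emp R P) = emp R (selfattn A V P).
Proof.
apply: funext => S; rewrite /meanfield /pushforward /= !empE.
congr EFin; congr (_ / _); apply: eq_bigr => a _.
by rewrite !indicE -(Gamma_emp P a).
Qed.

End Attn.


Section Cont.
Variables (R : realType) (t : R).

Lemma cont_cst (c : R) : {for t, continuous (fun _ : R => c)}.
Proof. exact: cvg_cst. Qed.

Lemma cont_id : {for t, continuous (fun s : R => s)}.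
Proof. exact: cvg_id. Qed.

Lemma cont_sum (I : finType) (F : I -> R -> R) :
  (forall i, {for t, continuous (F i)}) ->
  {for t, continuous (fun s => \sum_i F i s)}.
Proof.
move=> HF; apply: cvg_big => //; first exact: add_continuous.
by move=> i _; exact: HF.
Qed.

End Cont.

Section ContAttn.
Variables (R : realType) (k d : nat) (A : 'M[R]_d) (V : 'M[R]_(k, d)) (t : R).

Lemma selfattnE n (Z : 'I_n -> d.-tuple R) b i :
  tnth (selfattn A V Z b) i =
  \sum_j (expR (bil A (Z b) (Z j)) / \sum_l expR (bil A (Z b) (Z l))) *
         \sum_l V i l * tnth (Z j) l.
Proof.
rewrite /selfattn /ofcv tnth_mktuple mxE.
under eq_bigr do rewrite summxE mulr_sumr.
rewrite exchange_big /=; apply: eq_bigr => j _.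
rewrite /Pij mulr_sumr; apply: eq_bigr => l _.
rewrite !mxE; ring.
Qed.

Lemma cont_bil (x y : R -> d.-tuple R) :
  (forall j, {for t, continuous (fun s => tnth (x s) j)}) ->
  (forall j, {for t, continuous (fun s => tnth (y s) j)}) ->
  {for t, continuous (fun s => bil A (x s) (y s))}.
Proof.
move=> hx hy.
rewrite (_ : (fun s => bil A (x s) (y s)) =
   (fun s => \sum_q (\sum_p tnth (x s) p * A q p) * tnth (y s) q)); last first.
  by apply: funext => s; rewrite bilE.
apply: cont_sum => q; apply: continuousM; last exact: hy.
apply: cont_sum => p; apply: continuousM; first exact: hx.
exact: cont_cst.
Qed.

Lemma cont_selfattn n (Z : R -> 'I_n -> d.-tuple R) :
  (forall a j, {for t, continuous (fun s => tnth (Z s a) j)}) ->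
  forall b i, {for t, continuous (fun s => tnth (selfattn A V (Z s) b) i)}.
Proof.
move=> hZ b i.
rewrite (_ : (fun s => tnth (selfattn A V (Z s) b) i) =
  (fun s => \sum_j (expR (bil A (Z s b) (Z s j)) /
       \sum_l expR (bil A (Z s b) (Z s l))) * \sum_l V i l * tnth (Z s j) l));
  last by apply: funext => s; rewrite selfattnE.
have ce : forall j, {for t, continuous (fun s => expR (bil A (Z s b) (Z s j)))}.
  move=> j; apply: (continuous_comp (f := fun s => bil A (Z s b) (Z s j))).
    exact: cont_bil.
  exact: continuous_expR.
apply: cont_sum => j; apply: continuousM.
  apply: continuousM; first exact: ce.
  apply: continuousV; last exact: cont_sum.
  rewrite lt0r_neq0 // (bigD1 b) //= ltr_pwDl ?expR_gt0 //.
  by apply: sumr_ge0 => l _; exact: ltW (expR_gt0 _).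
apply: cont_sum => l; apply: continuousM; first exact: cont_cst.
exact: hZ.
Qed.

End ContAttn.

Section Sep.
Variables (R : realType) (t : R).

Lemma cont_segm n p (X Y : 'I_n -> p.-tuple R) a j :
  {for t, continuous (fun s => tnth (segm X Y s a) j)}.
Proof.
rewrite (_ : (fun s => tnth (segm X Y s a) j) =
  (fun s => tnth (X a) j + s * (tnth (Y a) j - tnth (X a) j))); last first.
  by apply: funext => s; rewrite tnth_mktuple.
apply: continuousD; first exact: cont_cst.
by apply: continuousM; [exact: cont_id | exact: cont_cst].
Qed.

Lemma sep_near m p (W : R -> 'I_m.+1 -> p.-tuple R) :
  (forall a j, {for t, continuous (fun s => tnth (W s a) j)}) ->
  \forall s \near t, sepc (W t) (W s).
Proof.
move=> hW.
have H : forall a b, \forall s \near t,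
    (W t a <> W t b -> 4 * sqd (W t b) (W s b) < sqd (W t a) (W t b)).
  move=> a b; have [e|ne] := eqVneq (W t a) (W t b).
    by apply: (@nearW _ (nbhs t)) => s /(_ e).
  have D0 : 0 < sqd (W t a) (W t b).
    rewrite lt_neqAle sqd_ge0 andbT eq_sym; apply/eqP => /sqd_eq0 e.
    by move: ne; rewrite e eqxx.
  pose g s := sqd (W t b) (W s b).
  have cg : {for t, continuous g}.
    rewrite /g /sqd; apply: cont_sum => j.
    rewrite (_ : (fun s => (tnth (W t b) j - tnth (W s b) j) ^+ 2) =
       (fun s => (tnth (W t b) j - tnth (W s b) j) * (tnth (W t b) j - tnth (W s b) j)));
      last by apply: funext => s; rewrite expr2.
    by apply: continuousM; apply: continuousB; [exact: cont_cst | exact: hW | exact: cont_cst | exact: hW].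
  have e4 : 0 < sqd (W t a) (W t b) / 4 by rewrite divr_gt0.
  have := @cvgr_dist_lt _ _ _ (nbhs t) _ g (g t) cg _ e4.
  move=> HH; move: (HH (nbhs_filter t)).
  apply: (@filterS _ (nbhs t)) => s; rewrite /g sqd_xx sub0r normrN => hs _.
  have := ler_norm (sqd (W t b) (W s b)); lra.
have H2 : forall a, \forall s \near t, forall b,
    (W t a <> W t b -> 4 * sqd (W t b) (W s b) < sqd (W t a) (W t b)).
  by move=> a; apply: (@filter_forall _ _ _ (nbhs t)) => b; exact: H.
have := @filter_forall R _ (fun a s => forall b,
    (W t a <> W t b -> 4 * sqd (W t b) (W s b) < sqd (W t a) (W t b))) (nbhs t) _ H2.
move=> /(_ (nbhs_filter t)) HH.
move: HH; apply: (@filterS _ (nbhs t)) => s hs a b; exact: hs.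
Qed.

End Sep.


Section Main.
Variables (R : realType) (r : R) (k d : nat) (A : 'M[R]_d) (V : 'M[R]_(k, d)).

Lemma near_delta (t : R) (P : R -> Prop) : (\forall s \near t, P s) ->
  exists2 e, 0 < e & forall s, `|s - t| < e -> P s.
Proof.
move=> /nbhs_ballP [e e0 He]; exists e => // s hs; apply: He.
by rewrite /ball /= distrC.
Qed.

Lemma supp_emp m (P : 'I_m.+1 -> d.-tuple R) :
  (forall a, ballB r (P a)) -> supported_in r (emp R P).
Proof.
move=> hP; rewrite /supported_in empE big1 ?mul0r // => a _.
by rewrite indicE memNset //= => /(_ (hP a)).
Qed.


Lemma main_real n (l : R) (X Y : 'I_n -> d.-tuple R) :
  0 < r -> 0 <= l ->
  (forall mu nu : probability (d.-tuple R) R, supported_in r mu ->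
     supported_in r nu -> (mu : set _ -> \bar R) <> nu ->
     (Defs.edivp (W2 (meanfield A V mu) (meanfield A V nu)) (W2 mu nu) <= l%:E)%E) ->
  (forall i, ballB r (X i)) -> (forall i, ballB r (Y i)) -> X <> Y ->
  frob (subX (selfattn A V X) (selfattn A V Y)) / frob (subX X Y) <= l.
Proof.
move=> r0 l0 hb hX hY hXY.
case: n X Y hX hY hXY => [|m] X Y hX hY hXY.
  by exfalso; apply: hXY; apply: funext => -[].
set H := \sum_a sqd (Y a) (X a).
have H0 : 0 < H.
  rewrite lt_neqAle; apply/andP; split; last by apply: sumr_ge0 => a _; exact: sqd_ge0.
  rewrite eq_sym psumr_eq0; last by move=> a _; exact: sqd_ge0.
  apply/negP => /allP hall; apply: hXY; apply: funext => a.
  have /implyP := hall a (mem_index_enum a); move=> /(_ isT) /eqP /sqd_eq0.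
  by move=> ->.
pose Z := segm X Y.
pose F s := selfattn A V (Z s).
pose D s u := Num.sqrt (\sum_a sqd (F s a) (F u a)).
have sH0 : 0 < Num.sqrt H by rewrite sqrtr_gt0.
have key : D 1 0 <= l * Num.sqrt H.
  apply: local_global.
  - by move=> x y z; exact: frob_tri.
  - by move=> x y; rewrite /D frob_sym.
  move=> t t01.
  have cZ : forall a j, {for t, continuous (fun s => tnth (Z s a) j)}.
    by move=> a j; exact: cont_segm.
  have [e1 e10 He1] := near_delta (sep_near cZ).
  have cF : forall a j, {for t, continuous (fun s => tnth (F s a) j)}.
    by move=> a j; apply: cont_selfattn.
  have [e2 e20 He2] := near_delta (sep_near cF).
  exists (Num.min e1 e2); first by rewrite lt_min e10 e20.
  move=> s s01 hst.
  have ge_min_l_tmp : Num.min e1 e2 <= e1 by rewrite ge_min lexx.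
  have ge_min_r_tmp : Num.min e1 e2 <= e2 by rewrite ge_min lexx orbT.
  have hs1 := He1 s (lt_le_trans hst (ge_min_l_tmp)).
  have hs2 := He2 s (lt_le_trans hst (ge_min_r_tmp)).
  have [->|ne] := eqVneq s t.
    rewrite /D big1; first by rewrite sqrtr0 subrr normr0 mulr0.
    by move=> a _; exact: sqd_xx.
  have ZE : \sum_a sqd (Z t a) (Z s a) = (t - s) ^+ 2 * H by rewrite segm_diff.
  have hpos : 0 < \sum_a sqd (Z t a) (Z s a).
    rewrite ZE mulr_gt0 // lt_neqAle sqr_ge0 andbT eq_sym sqrf_eq0 subr_eq0.
    by rewrite eq_sym.
  have sup : forall u, 0 <= u <= 1 -> supported_in r (emp R (Z u)).
    by move=> u u01; apply: supp_emp => a; exact: segm_ball.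
  have := hb _ _ (sup t t01) (sup s s01) (emp_neq hs1 hpos).
  rewrite !meanfield_emp !W2_emp // /= lee_fin.
  set a := \sum_(a < m.+1) _; set b := \sum_(a < m.+1) sqd (Z t a) (Z s a).
  have a0 : 0 <= a by apply: sumr_ge0 => i _; exact: sqd_ge0.
  have nI : 0 < (m.+1%:R : R)^-1 by rewrite invr_gt0 ltr0n.
  have sb : 0 < Num.sqrt b by rewrite sqrtr_gt0.
  have sn : 0 < Num.sqrt ((m.+1%:R : R)^-1) by rewrite sqrtr_gt0.
  rewrite !sqrtrM //; last exact: ltW.
  have -> : Num.sqrt a * Num.sqrt (m.+1%:R^-1) / (Num.sqrt b * Num.sqrt (m.+1%:R^-1)) =
            Num.sqrt a / Num.sqrt b.
    by field; rewrite (lt0r_neq0 sb) (lt0r_neq0 sn).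
  rewrite ler_pdivrMr // => h.
  have -> : D s t = Num.sqrt a by rewrite /D frob_sym.
  apply: le_trans h _.
  rewrite /b ZE sqrtrM ?sqr_ge0 // sqrtr_sqr distrC.
  by rewrite [X in _ <= X]mulrAC mulrA lexx.
rewrite !frobE.
have -> : \sum_a sqd (X a) (Y a) = H by rewrite /H frob_sym.
rewrite ler_pdivrMr // -[X in X <= _](_ : D 1 0 = _) //.
by rewrite /D /F /Z segm1 segm0 frob_sym.
Qed.

End Main.

Theorem mainTheorem5 (R : realType) (r : R) (n k d : nat)
  (Q K V : 'M[R]_(k, d)) :
  0 < r ->
  (LipF (selfattn (attnA Q K) V) [set X : 'I_n -> d.-tuple R | forall i, @ballB R d r (X i)]
   <= LipW2 r (meanfield (attnA Q K) V))%E.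
Proof.
move=> r0.
set L := LipW2 r (meanfield (attnA Q K) V).
have L0 : (0 <= L)%E.
  by apply: le_ereal_sup_tmp; exists 0%E => //; left.
apply: ge_ereal_sup => x [-> // | [X [Y [hX hY hXY ->]]]].
have hub : forall mu nu : probability (d.-tuple R) R, supported_in r mu ->
    supported_in r nu -> (mu : set _ -> \bar R) <> nu ->
    (Defs.edivp (W2 (meanfield (attnA Q K) V mu) (meanfield (attnA Q K) V nu))
       (W2 mu nu) <= L)%E.
  move=> mu nu smu snu neq; apply: ereal_sup_ubound; right; exists mu, nu; by split.
clearbody L; move: L0 hub; case: L => [l| |] L0 hub; last 2 first.
- exact: leey.
- by move: L0; rewrite leeNy_eq.
rewrite lee_fin; apply: (@main_real R r k d (attnA Q K) V n l X Y) => //.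
Qed.
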